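(* Let $f,g\in C[0,1]$ satisfy $f(x)\neq0$ and $g(x)\neq0$ for all $x\in[0,1]$, and suppose $\overline{\dim}_B G(f)\neq\overline{\dim}_B G(g)$. Then $$\overline{\dim}_B G(f\cdot g)=\max\{\overline{\dim}_B G(f),\ \overline{\dim}_B G(g)\}.$$
   Context: $C[0,1]$ is the space of real-valued continuous functions on $[0,1]$; $G(f)=\{(x,f(x)):x\in[0,1]\}\subset\mathbb{R}^2$ is the graph of $f$; $f\cdot g$ is the pointwise product. For a nonempty bounded set $F$, $N_\delta(F)$ is the smallest number of sets of diameter at most $\delta$ covering $F$, and $\overline{\dim}_B F=\limsup_{\delta\to0}\frac{\log N_\delta(F)}{-\log\delta}$. *)

(* Defs.v *)
From HB Require Import structures.
From mathcomp Require Import all_boot all_order all_algebra.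
From mathcomp Require Import all_classical all_reals all_analysis.
Set Implicit Arguments. Unset Strict Implicit. Unset Printing Implicit Defensive.
Import Order.TTheory GRing.Theory Num.Theory.
Import numFieldNormedType.Exports.
Local Open Scope classical_set_scope.
Local Open Scope ring_scope.

Section BoxDim.
Variable R : realType.

Definition edist (p q : R * R) : R :=
  Num.sqrt ((p.1 - q.1) ^+ 2 + (p.2 - q.2) ^+ 2).

(* diameter of a subset of R^2 (extended real; -oo for the empty set) *)
Definition ediam (A : set (R * R)) : \bar R :=
  ereal_sup [set (edist p.1 p.2)%:E | p in A `*` A].

Definition delta_cover (F : set (R * R)) (delta : R) (n : nat) : Prop :=
  exists C : 'I_n -> set (R * R),
    (forall i, (ediam (C i) <= delta%:E)%E) /\ F `<=` \bigcup_(i in setT) C i.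

Definition covnum (F : set (R * R)) (delta : R) : \bar R :=
  ereal_inf [set (n%:R)%:E | n in delta_cover F delta].

Definition upper_box_dim (F : set (R * R)) : \bar R :=
  limf_esup (fun delta : R => (ln (fine (covnum F delta)) / - ln delta)%:E)
            (0%R)^'+.

Definition graph01 (f : R -> R) : set (R * R) :=
  [set (x, f x) | x in `[0%R, 1%R]].

End BoxDim.

(* Main.v *)
Require Import Defs.
From HB Require Import structures.
From mathcomp Require Import all_boot all_order all_algebra.
From mathcomp Require Import all_classical all_reals all_analysis.
From mathcomp Require Import ring lra zify.
Import Order.TTheory GRing.Theory Num.Theory.
Import numFieldNormedType.Exports.
Local Open Scope classical_set_scope.
Local Open Scope ring_scope.
Set Implicit Arguments. Unset Strict Implicit. Unset Printing Implicit Defensive.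

Section Geo.
Variable R : realType.
Implicit Types (A B : set (R * R)) (d : R).

Lemma ediam_le A d : (forall p q, A p -> A q -> Defs.edist p q <= d) -> (ediam A <= d%:E)%E.
Proof. by move=> H; apply/ereal_supP => _ [[p q] [/= Ap Aq] <-]; rewrite lee_fin; exact: H. Qed.

Lemma ediam_dist A d p q : (ediam A <= d%:E)%E -> A p -> A q -> Defs.edist p q <= d.
Proof.
move=> H Ap Aq; rewrite -lee_fin; apply: le_trans H.
by apply: ereal_sup_ubound; exists (p, q).
Qed.

Lemma edist_ge1 (p q : R * R) : `|p.1 - q.1| <= Defs.edist p q.
Proof. by rewrite -sqrtr_sqr /Defs.edist ler_wsqrtr // lerDl sqr_ge0. Qed.

Lemma edist_ge2 (p q : R * R) : `|p.2 - q.2| <= Defs.edist p q.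
Proof. by rewrite -sqrtr_sqr /Defs.edist ler_wsqrtr // lerDr sqr_ge0. Qed.

Lemma cover_mono A B d n : A `<=` B -> delta_cover B d n -> delta_cover A d n.
Proof. by move=> AB [C [h c]]; exists C; split => // p /AB /c. Qed.

Lemma cover_U A B d n1 n2 : delta_cover A d n1 -> delta_cover B d n2 ->
  delta_cover (A `|` B) d (n1 + n2).
Proof.
move=> [C1 [h1 c1]] [C2 [h2 c2]].
exists (fun i => match fintype.split i with inl a => C1 a | inr b => C2 b end); split.
- by move=> i; case: fintype.split => ?; [exact: h1|exact: h2].
- move=> p [/c1 [i _ Ci]|/c2 [i _ Ci]].
  + by exists (fintype.unsplit (inl i)) => //; rewrite fintype.unsplitK.
  + by exists (fintype.unsplit (inr i)) => //; rewrite fintype.unsplitK.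
Qed.

Lemma cover_bigU (G : nat -> set (R * R)) (t : nat -> nat) d m :
  (forall j, (j < m)%N -> delta_cover (G j) d (t j)) ->
  delta_cover [set p | exists2 j, (j < m)%N & G j p] d (\sum_(j < m) t j).
Proof.
elim: m => [|m IH] H.
  rewrite big_ord0; exists (fun _ => set0); split.
    by move=> i; apply: ediam_le.
  by move=> p [].
rewrite big_ord_recr /=.
apply: (@cover_mono _ ([set p | exists2 j, (j < m)%N & G j p] `|` G m)).
  move=> p [j]; rewrite ltnS leq_eqVlt => /orP[/eqP ->|jm] Gp; first by right.
  by left; exists j.
apply: cover_U; first by apply: IH => j jm; apply: H; exact: ltnW.
exact: H.
Qed.

Lemma cover_one A d : (forall p q, A p -> A q -> Defs.edist p q <= d) -> delta_cover A d 1.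
Proof.
move=> H; exists (fun _ => A); split; first by move=> _; exact: ediam_le.
by move=> p Ap; exists ord0.
Qed.

Lemma box_dist (a b c e d : R) p q : 0 <= d -> b - a <= d / 2 -> e - c <= d / 2 ->
  a <= p.1 <= b -> c <= p.2 <= e -> a <= q.1 <= b -> c <= q.2 <= e ->
  Defs.edist p q <= d.
Proof.
move=> d0 hab hce /andP[p1 p1'] /andP[p2 p2'] /andP[q1 q1'] /andP[q2 q2'].
have h1 : `|p.1 - q.1| <= d / 2.
  rewrite ler_norml; apply/andP; split; lra.
have h2 : `|p.2 - q.2| <= d / 2.
  rewrite ler_norml; apply/andP; split; lra.
rewrite /Defs.edist -(ger0_norm d0) -sqrtr_sqr ler_wsqrtr //.
rewrite -(real_normK (num_real (p.1 - q.1))) -(real_normK (num_real (p.2 - q.2))).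
have n1 := normr_ge0 (p.1 - q.1); have n2 := normr_ge0 (p.2 - q.2).
nra.
Qed.


Definition ca d (j : nat) : R := j%:R * (d / 2).
Definition cb d (j : nat) : R := Num.min (j.+1%:R * (d / 2)) 1.
Definition ncol d := (Num.trunc (2 / d)).+1.

Lemma col_prop d j : 0 < d -> (j < ncol d)%N ->
  [/\ 0 <= ca d j, ca d j <= cb d j, cb d j <= 1 & cb d j - ca d j <= d / 2].
Proof.
move=> d0; rewrite ltnS truncn_ge_nat; last by rewrite divr_ge0 // ltW.
move=> hj.
have e : 2 / d * d = 2 by field; rewrite gt_eqF.
have j0 : 0 <= j%:R :> R by [].
have hca : ca d j <= 1 by rewrite /ca; nra.
rewrite /cb; split.
- by rewrite /ca mulr_ge0 // divr_ge0 // ltW.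
- rewrite le_min hca andbT /ca ler_wpM2r ?divr_ge0 ?ltW //; by rewrite -natr1; lra.
- by rewrite ge_min lexx orbT.
- have : Num.min (j.+1%:R * (d / 2)) 1 <= j.+1%:R * (d / 2) by rewrite ge_min lexx.
  by rewrite /ca -natr1; lra.
Qed.

Lemma col_cover d x : 0 < d -> 0 <= x <= 1 ->
  exists2 j, (j < ncol d)%N & ca d j <= x <= cb d j.
Proof.
move=> d0 /andP[x0 x1].
have y0 : 0 <= 2 * x / d by apply: divr_ge0; lra.
exists (Num.trunc (2 * x / d)).
  rewrite ltnS le_truncn // ler_pM2r ?invr_gt0 //; lra.
have /andP[t1 t2] := truncn_itv y0.
set j := Num.trunc _ in t1 t2 *.
have e : 2 * x / d * d = 2 * x by field; rewrite gt_eqF.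
have j0 : 0 <= j%:R :> R by [].
have e1 : (j.+1%:R : R) = j%:R + 1 by rewrite natr1.
rewrite /ca /cb le_min x1 andbT; apply/andP; split; nra.
Qed.

Definition cmin (h : R -> R) (a b : R) :=
  xget a [set c | c \in `[a, b] /\ forall t, t \in `[a, b] -> h c <= h t].
Definition cmax (h : R -> R) (a b : R) :=
  xget a [set c | c \in `[a, b] /\ forall t, t \in `[a, b] -> h t <= h c].
Definition osc h a b := h (cmax h a b) - h (cmin h a b).

Lemma cminP h a b : a <= b -> {within `[a, b], continuous h} ->
  cmin h a b \in `[a, b] /\ forall t, t \in `[a, b] -> h (cmin h a b) <= h t.
Proof.
move=> ab hc; have [c c1 c2] := EVT_min ab hc.
exact: (@xgetPex _ a [set c | c \in `[a, b] /\ forall t, t \in `[a, b] -> h c <= h t] (ex_intro _ c (conj c1 c2))).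
Qed.

Lemma cmaxP h a b : a <= b -> {within `[a, b], continuous h} ->
  cmax h a b \in `[a, b] /\ forall t, t \in `[a, b] -> h t <= h (cmax h a b).
Proof.
move=> ab hc; have [c c1 c2] := EVT_max ab hc.
exact: (@xgetPex _ a [set c | c \in `[a, b] /\ forall t, t \in `[a, b] -> h t <= h c] (ex_intro _ c (conj c1 c2))).
Qed.

Lemma osc_ge0 h a b : a <= b -> {within `[a, b], continuous h} -> 0 <= osc h a b.
Proof.
move=> ab hc; have [m1 m2] := cminP ab hc; have [M1 M2] := cmaxP ab hc.
by rewrite /osc subr_ge0; apply: m2.
Qed.

Lemma osc_bound h a b x y : a <= b -> {within `[a, b], continuous h} ->
  x \in `[a, b] -> y \in `[a, b] -> `|h x - h y| <= osc h a b.
Proof.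
move=> ab hc xi yi; have [m1 m2] := cminP ab hc; have [M1 M2] := cmaxP ab hc.
have := m2 _ xi; have := m2 _ yi; have := M2 _ xi; have := M2 _ yi.
rewrite /osc ler_norml; move=> *; apply/andP; split; lra.
Qed.

Lemma sub01 d j : 0 < d -> (j < ncol d)%N -> `[ca d j, cb d j] `<=` (`[0, 1] : set R).
Proof.
move=> d0 jn; have [? ? ? ?] := col_prop d0 jn.
move=> x /=; rewrite !in_itv /= => /andP[? ?]; apply/andP; split; lra.
Qed.


Definition Qsum (h : R -> R) d :=
  \sum_(j < ncol d) (2 * osc h (ca d j) (cb d j) / d + 1).

Lemma cover_upper (h : R -> R) d : 0 < d -> {within `[0, 1], continuous h} ->
  exists n, delta_cover (graph01 h) d n /\ n%:R <= Qsum h d.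
Proof.
move=> d0 hc.
pose a j := ca d j; pose b j := cb d j.
pose lo j := h (cmin h (a j) (b j)).
pose t j := (Num.trunc (2 * osc h (a j) (b j) / d)).+1.
pose box j (k : nat) := [set p : R * R | a j <= p.1 <= b j /\
   lo j + k%:R * (d / 2) <= p.2 <= lo j + k.+1%:R * (d / 2)].
exists (\sum_(j < ncol d) t j); split.
- apply: (cover_mono _ (@cover_bigU (fun j => [set p : R * R | a j <= p.1 <= b j /\ p.2 = h p.1]) t d (ncol d) _)).
  + move=> _ [x x01 <-]; rewrite /= in_itv /= in x01.
    by have [j jn hj] := col_cover d0 x01; exists j.
  move=> j jn; have [c0 c1 c2 c3] := col_prop d0 jn.
  have hcj : {within `[a j, b j], continuous h} := continuous_subspaceW (sub01 d0 jn) hc.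
  apply: (@cover_mono _ [set p | exists2 k, (k < t j)%N & box j k p]); last first.
    have := @cover_bigU (box j) (fun _ => 1%N) d (t j).
    rewrite sum1_card card_ord; apply => k _.
    apply: cover_one => p q [hp1 hp2] [hq1 hq2].
    apply: (box_dist (ltW d0) c3 _ hp1 hp2 hq1 hq2).
    by rewrite -natr1; lra.
  + move=> [x y] /= [pab ->].
    have xi : x \in `[a j, b j] by rewrite in_itv /=.
    have [m1 m2] := cminP c1 hcj; have hx := m2 _ xi.
    have hb := osc_bound c1 hcj xi m1.
    have y0 : 0 <= (h x - lo j) / (d / 2) by apply: divr_ge0; rewrite /lo; lra.
    have e : (h x - lo j) / (d / 2) * (d / 2) = h x - lo j by field; rewrite gt_eqF.
    exists (Num.trunc ((h x - lo j) / (d / 2))).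
      rewrite ltnS le_truncn // ler_pdivrMr ?divr_gt0 //.
      have -> : 2 * osc h (a j) (b j) / d * (d / 2) = osc h (a j) (b j) by field; rewrite gt_eqF.
      by move: hb; rewrite /lo ger0_norm ?subr_ge0.
    have /andP[t1 t2] := truncn_itv y0.
    set k := Num.trunc _ in t1 t2 *.
    have e1 : (k.+1%:R : R) = k%:R + 1 by rewrite natr1.
    split => //=; apply/andP; split; nra.
- rewrite /Qsum natr_sum; apply: ler_sum => j _; rewrite /t -natr1 lerD2r.
  have [c0 c1 c2 c3] := col_prop d0 (ltn_ord j).
  have hcj : {within `[a j, b j], continuous h} := continuous_subspaceW (sub01 d0 (ltn_ord j)) hc.
  rewrite truncn_le; apply: divr_ge0; last exact: ltW.
  by apply: mulr_ge0 => //; apply: osc_ge0.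
Qed.


Lemma len_cover (n : nat) (D : 'I_n -> set R) d : 0 <= d ->
  (forall i y1 y2, D i y1 -> D i y2 -> y1 - y2 <= d) ->
  forall k (l : seq 'I_n) a b, size l = k -> a <= b ->
  (forall y, a <= y <= b -> exists2 i, i \in l & D i y) ->
  b - a <= k%:R * d.
Proof.
move=> d0 Hd; elim=> [|k IH] l a b sl ab cov.
  have hb : a <= b <= b by rewrite ab lexx.
  by have [i] := cov b hb; rewrite (size0nil sl).
have hb : a <= b <= b by rewrite ab lexx.
have [i il Dib] := cov b hb.
apply/ler_addgt0Pr => e e0.
have kd : 0 <= k%:R * d by apply: mulr_ge0.
rewrite -natr1 mulrDl mul1r.
have [lt|ge] := ltP (b - d - e) a; first by lra.
have := IH (rem i l) a (b - d - e).
rewrite size_rem // sl /= => /(_ erefl ge) H.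
suff : b - d - e - a <= k%:R * d by lra.
apply: H => y /andP[ay yb].
have hy : a <= y <= b by rewrite ay /=; lra.
have [j jl Djy] := cov y hy.
exists j => //; apply: rem_mem => //; apply/eqP => ji; subst j.
have := Hd _ _ _ Dib Djy; lra.
Qed.

Lemma dcount m n (P : 'I_n -> 'I_m -> bool) :
  (\sum_(j < m) #|[set i | P i j]%SET| = \sum_(i < n) #|[set j | P i j]%SET|)%N.
Proof.
rewrite (eq_bigr (fun j => (\sum_(i < n) (P i j : nat))%N)); last first.
  by move=> j _; rewrite -sum1dep_card big_mkcond /=; apply: eq_bigr => i _; case: (P i j).
rewrite exchange_big; apply: eq_bigr => i _.
by rewrite -sum1dep_card [RHS]big_mkcond /=; apply: eq_bigr => j _; case: (P i j).
Qed.

Lemma card7 m (J : {set 'I_m}) :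
  (forall j1 j2, j1 \in J -> j2 \in J -> (j1 <= j2 + 3)%N) -> (#|J| <= 7)%N.
Proof.
move=> HJ; case: (set_0Vmem J) => [->|[j0 j0J]]; first by rewrite cards0.
pose f (j : 'I_m) : 'I_7 := inord (j + 3 - j0).
rewrite -(@card_in_imset _ _ f); first by apply: leq_trans (max_card _) _; rewrite card_ord.
move=> j k jJ kJ /(congr1 val) /=.
have := HJ _ _ jJ j0J; have := HJ _ _ j0J jJ.
have := HJ _ _ kJ j0J; have := HJ _ _ j0J kJ.
move=> h1 h2 h3 h4; rewrite !inordK; try lia.
move=> e; apply: val_inj => /=; lia.
Qed.


Lemma cover_lower (h : R -> R) d n : 0 < d -> {within `[0, 1], continuous h} ->
  delta_cover (graph01 h) d n -> Qsum h d <= 21 * n%:R.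
Proof.
move=> d0 hc [C [hC cC]].
pose P (i : 'I_n) (j : 'I_(ncol d)) :=
  `[< exists x, ca d j <= x <= cb d j /\ C i (x, h x) >].
have step : forall j : 'I_(ncol d),
    2 * osc h (ca d j) (cb d j) / d + 1 <= 3 * (#|[set i | P i j]%SET|)%:R.
  move=> j; have [c0 c1 c2 c3] := col_prop d0 (ltn_ord j).
  have sj := sub01 d0 (ltn_ord j).
  have hcj : {within `[ca d j, cb d j], continuous h} := continuous_subspaceW sj hc.
  have [m1 m2] := cminP c1 hcj; have [M1 M2] := cmaxP c1 hcj.
  set lo := cmin h _ _ in m1 m2 *; set hi := cmax h _ _ in M1 M2 *.
  have cov : forall y, h lo <= y <= h hi -> exists2 i, i \in enum [set i | P i j]%SET &
      exists x, ca d j <= x <= cb d j /\ C i (x, y) /\ y = h x.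
    move=> y hy.
    have [x xi hxy] : exists2 x, x \in `[ca d j, cb d j] & h x = y.
      have [lh|hl] := leP lo hi.
        have sub : `[lo, hi] `<=` (`[ca d j, cb d j] : set R).
          move=> z /=; move: m1 M1; rewrite !in_itv /= => /andP[? ?] /andP[? ?] /andP[? ?].
          apply/andP; split; lra.
        have hy' : Num.min (h lo) (h hi) <= y <= Num.max (h lo) (h hi).
          by case/andP: hy => ? ?; rewrite ge_min le_max; apply/andP; split; apply/orP; [left|right].
        have [x xi hx] := IVT lh (continuous_subspaceW sub hcj) hy'.
        by exists x => //; apply: sub.
      have sub : `[hi, lo] `<=` (`[ca d j, cb d j] : set R).
        move=> z /=; move: m1 M1; rewrite !in_itv /= => /andP[? ?] /andP[? ?] /andP[? ?].
        apply/andP; split; lra.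
      have hy' : Num.min (h hi) (h lo) <= y <= Num.max (h hi) (h lo).
        by case/andP: hy => ? ?; rewrite ge_min le_max; apply/andP; split; apply/orP; [right|left].
      have [x xi hx] := IVT (ltW hl) (continuous_subspaceW sub hcj) hy'.
      by exists x => //; apply: sub.
    have x01 : x \in `[0, 1] by apply: sj.
    have [i _ Ci] := cC (x, h x) (ex_intro2 _ _ x x01 erefl).
    move: xi; rewrite in_itv /= => xi.
    exists i; last by exists x; rewrite -hxy.
    by rewrite mem_enum inE; apply/asboolP; exists x.
  have Hl := @len_cover n (fun i => [set y | exists x, ca d j <= x <= cb d j /\ C i (x, y) /\ y = h x])
    d (ltW d0) _ _ (enum [set i | P i j]%SET) (h lo) (h hi) erefl (m2 _ M1) cov.
  have Hl' : osc h (ca d j) (cb d j) <= (#|[set i | P i j]%SET|)%:R * d.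
    rewrite cardE; apply: Hl.
    move=> i y1 y2 [x1 [_ [C1 _]]] [x2 [_ [C2 _]]].
    apply: le_trans (ler_norm _) _; apply: le_trans (edist_ge2 (x1, y1) (x2, y2)) _.
    exact: ediam_dist (hC i) C1 C2.
  have pos : (1 <= #|[set i | P i j]%SET|)%N.
    have [y hy] : exists y, h lo <= y <= h hi by exists (h lo); rewrite lexx m2.
    have [i il _] := cov y hy.
    by rewrite card_gt0; apply/set0Pn; exists i; rewrite -mem_enum.
  have : (1 : R) <= (#|[set i | P i j]%SET|)%:R by rewrite ler1n.
  have : osc h (ca d j) (cb d j) / d <= (#|[set i | P i j]%SET|)%:R by rewrite ler_pdivrMr.
  lra.
apply: le_trans (ler_sum _ (fun j _ => step j)) _.
rewrite -mulr_sumr -natr_sum dcount natr_sum.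
have -> : (21 : R) * n%:R = 3 * \sum_(i < n) 7 by rewrite sumr_const card_ord; lra.
rewrite ler_pM2l // ler_sum // => i _; rewrite ler_nat card7 // => j1 j2.
rewrite !inE => -[x1 [hx1 C1]] [x2 [hx2 C2]].
case/andP: hx1 => x1a _; case/andP: hx2 => _; rewrite /cb le_min => /andP[x2b _].
have hd := ediam_dist (hC i) C1 C2.
have hn := edist_ge1 (x1, h x1) (x2, h x2); rewrite /= in hn.
have hx : x1 - x2 <= d by apply: le_trans (ler_norm _) (le_trans hn hd).
move: x1a; rewrite /ca => x1a.
have e1 : (j2.+1%:R : R) = j2%:R + 1 by rewrite natr1.
have : (j1%:R : R) <= j2%:R + 3 by nra.
by rewrite -[3]/(3%:R) -natrD ler_nat.
Qed.


Definition Nf (h : R -> R) d := fine (covnum (graph01 h) d).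

Lemma N_bounds (h : R -> R) d : 0 < d -> {within `[0, 1], continuous h} ->
  [/\ 1 <= Nf h d, Nf h d <= Qsum h d & Qsum h d <= 21 * Nf h d].
Proof.
move=> d0 hc.
have [n0 [cov0 hn0]] := cover_upper d0 hc.
have up : (covnum (graph01 h) d <= (n0%:R)%:E)%E.
  by apply: ge_ereal_inf; exists (n0%:R)%:E => //; exists n0.
have low : forall n : nat, delta_cover (graph01 h) d n -> (1 : R) <= n%:R /\ Qsum h d <= 21 * n%:R.
  move=> n cov; split; last exact: cover_lower d0 hc cov.
  case: n cov => [|n] cov; last by rewrite ler1n.
  have [C [_ cC]] := cov.
  have x01 : (0:R) \in `[0, 1] by rewrite in_itv /= lexx ler01.
  by have [[i ?] _ _] := cC (0, h 0) (ex_intro2 _ _ 0 x01 erefl).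
have lowE : ((Num.max 1 (Qsum h d / 21))%:E <= covnum (graph01 h) d)%E.
  apply/ereal_infP => _ [n cov <-]; rewrite lee_fin.
  have [l1 l2] := low n cov; rewrite ge_max l1 /=; lra.
rewrite /Nf; move: up lowE; case: (covnum _ _) => [r| |] //= up lowE.
rewrite !lee_fin ge_max in up lowE; case/andP: lowE => l1 l2.
split => //; [lra | lra].
Qed.

Lemma osc_dom (h u v : R -> R) (A B : R) a b : a <= b ->
  {within `[a, b], continuous h} -> {within `[a, b], continuous u} ->
  {within `[a, b], continuous v} ->
  (forall x y, x \in `[a, b] -> y \in `[a, b] ->
     `|h x - h y| <= A * `|u x - u y| + B * `|v x - v y|) -> 0 <= A -> 0 <= B ->
  osc h a b <= A * osc u a b + B * osc v a b.
Proof.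
move=> ab hh hu hv H A0 B0.
have [m1 _] := cminP ab hh; have [M1 _] := cmaxP ab hh.
apply: le_trans (ler_norm _) _; apply: le_trans (H _ _ M1 m1) _.
apply: lerD; apply: ler_wpM2l => //; exact: osc_bound.
Qed.

Lemma Q_dom (h u v : R -> R) (A B : R) d : 0 < d ->
  {within `[0, 1], continuous h} -> {within `[0, 1], continuous u} ->
  {within `[0, 1], continuous v} ->
  (forall x y, x \in `[0, 1] -> y \in `[0, 1] ->
     `|h x - h y| <= A * `|u x - u y| + B * `|v x - v y|) -> 0 <= A -> 0 <= B ->
  Qsum h d <= (A + B + 1) * (Qsum u d + Qsum v d).
Proof.
move=> d0 hh hu hv H A0 B0.
rewrite /Qsum -big_split mulr_sumr /=; apply: ler_sum => j _.
have [c0 c1 c2 c3] := col_prop d0 (ltn_ord j).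
have sj := sub01 d0 (ltn_ord j).
have o := osc_dom c1 (continuous_subspaceW sj hh) (continuous_subspaceW sj hu)
  (continuous_subspaceW sj hv) (fun x y xi yi => H x y (sj _ xi) (sj _ yi)) A0 B0.
have ou := osc_ge0 c1 (continuous_subspaceW sj hu).
have ov := osc_ge0 c1 (continuous_subspaceW sj hv).
set oh := osc h _ _ in o *; set su := osc u _ _ in o ou *; set sv := osc v _ _ in o ov *.
have t0 : 0 < 2 / d by rewrite divr_gt0.
have e1 : forall z, 2 * z / d = z * (2 / d) by move=> z; rewrite mulrAC mulrC.
rewrite !e1.
have : oh * (2 / d) <= (A * su + B * sv) * (2 / d) by rewrite ler_wpM2r // ltW.
have p1 : 0 <= su * (2 / d) by rewrite mulr_ge0 // ltW.
have p2 : 0 <= sv * (2 / d) by rewrite mulr_ge0 // ltW.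
move: p1 p2; set U := su * _; set V := sv * _ => p1 p2.
have -> : (A * su + B * sv) * (2 / d) = A * U + B * V by rewrite /U /V; ring.
nra.
Qed.

Lemma bnd (h : R -> R) : {within `[0, 1], continuous h} ->
  exists M, 0 <= M /\ forall x, x \in `[0, 1] -> `|h x| <= M.
Proof.
move=> hc; have ab : (0:R) <= 1 by [].
have [m1 m2] := cminP ab hc; have [M1 M2] := cmaxP ab hc.
exists (`|h (cmin h 0 1)| + `|h (cmax h 0 1)|); split; first by rewrite addr_ge0.
move=> x xi; have := m2 _ xi; have := M2 _ xi.
have := ler_norm (h (cmax h 0 1)); have := ler_norm (- h (cmin h 0 1)); rewrite normrN.
have := normr_ge0 (h (cmax h 0 1)); have := normr_ge0 (h (cmin h 0 1)).
move=> *; rewrite ler_norml; apply/andP; split; lra.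
Qed.

Lemma lbnd (h : R -> R) : {within `[0, 1], continuous h} ->
  (forall x, x \in `[0, 1] -> h x != 0) ->
  exists m, 0 < m /\ forall x, x \in `[0, 1] -> m <= `|h x|.
Proof.
move=> hc hnz; have ab : (0:R) <= 1 by [].
have [m1 m2] := cminP ab hc; have [M1 M2] := cmaxP ab hc.
set lo := cmin h 0 1 in m1 m2 *; set hi := cmax h 0 1 in M1 M2 *.
have [lopos|lonpos] := ltP 0 (h lo).
  exists (h lo); split => // x xi; have := m2 _ xi => hx.
  by rewrite ger0_norm //; lra.
have [hineg|hinneg] := ltP (h hi) 0.
  exists (- h hi); split; first by lra.
  move=> x xi; have := M2 _ xi => hx.
  by rewrite ler0_norm //; lra.
exfalso.
have hy : Num.min (h lo) (h hi) <= 0 <= Num.max (h lo) (h hi).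
  by rewrite ge_min le_max lonpos hinneg ?orbT.
have hy' : Num.min (h hi) (h lo) <= 0 <= Num.max (h hi) (h lo).
  by rewrite ge_min le_max lonpos hinneg ?orbT.
have [lh|hl] := leP lo hi.
  have sub : `[lo, hi] `<=` (`[0, 1] : set R).
    move=> z /=; move: m1 M1; rewrite !in_itv /= => /andP[? ?] /andP[? ?] /andP[? ?].
    apply/andP; split; lra.
  have [x xi hx] := IVT lh (continuous_subspaceW sub hc) hy.
  by have := hnz x (sub _ xi); rewrite hx eqxx.
have sub : `[hi, lo] `<=` (`[0, 1] : set R).
  move=> z /=; move: m1 M1; rewrite !in_itv /= => /andP[? ?] /andP[? ?] /andP[? ?].
  apply/andP; split; lra.
have [x xi hx] := IVT (ltW hl) (continuous_subspaceW sub hc) hy'.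
by have := hnz x (sub _ xi); rewrite hx eqxx.
Qed.


Lemma le_real_lt (A M : \bar R) :
  (forall y : R, (M < y%:E)%E -> (A <= y%:E)%E) -> (A <= M)%E.
Proof.
case: M => [m| |] H.
- apply/lee_addgt0Pr => e e0; apply: H; rewrite lte_fin; lra.
- by rewrite leey.
- case: A H => [r| |] H //.
  + by have := H (r - 1)%R (ltNyr _); rewrite lee_fin => h1; exfalso; lra.
  + by have := H 0 (ltNyr _).
Qed.

Lemma eventually_small (K e : R) : 0 <= K -> 0 < e ->
  \forall x \near (0:R)^'+, K / (- ln x) < e /\ 0 < - ln x.
Proof.
move=> K0 e0.
have T0 : 0 < expR (- (K / e + 1)) := expR_gt0 _.
near=> x.
have x0 : 0 < x by near: x; exact: nbhs_right_gt.
have xT : x < expR (- (K / e + 1)) by near: x; exact: nbhs_right_lt.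
have lx : ln x < - (K / e + 1).
  by rewrite -[X in _ < X](expRK) ltr_ln ?posrE.
have Ke : K / e * e = K by field; rewrite gt_eqF.
have Kp : 0 <= K / e by rewrite divr_ge0 // ltW.
have L0 : 0 < - ln x by lra.
split => //; rewrite ltr_pdivrMr //; nra.
Unshelve. all: end_near.
Qed.

Lemma limsup_le (a b c : R -> R) (K : R) : 0 <= K ->
  (\forall x \near (0:R)^'+, a x <= Num.max (b x) (c x) + K / (- ln x)) ->
  (limf_esup (fun x => (a x)%:E) (0:R)^'+ <=
   Order.max (limf_esup (fun x => (b x)%:E) (0:R)^'+)
             (limf_esup (fun x => (c x)%:E) (0:R)^'+))%E.
Proof.
move=> K0 H; apply: le_real_lt => y.
rewrite gt_max => /andP[hb hc].
apply/lee_addgt0Pr => e e0.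
rewrite limf_esupE in hb; rewrite limf_esupE in hc; rewrite limf_esupE.
have [_ [V1 FV1 <-] s1] := ereal_inf_lt hb.
have [_ [V2 FV2 <-] s2] := ereal_inf_lt hc.
have He := eventually_small K0 e0.
set W := V1 `&` V2 `&` [set x | a x <= Num.max (b x) (c x) + K / (- ln x)]
   `&` [set x | K / (- ln x) < e /\ 0 < - ln x].
have FW : (0:R)^'+ W by apply: filterI; [apply: filterI; [apply: filterI|]|].
apply: ge_ereal_inf; exists (ereal_sup ((fun x => (a x)%:E) @` W)); first by exists W.
apply/ereal_supP => _ [x [[[xV1 xV2] xa] [xe _]] <-]; rewrite lee_fin.
have bx : ((b x)%:E < y%:E)%E.
  by apply: le_lt_trans s1; apply: ereal_sup_ubound; exists x.
have cx : ((c x)%:E < y%:E)%E.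
  by apply: le_lt_trans s2; apply: ereal_sup_ubound; exists x.
rewrite !lte_fin in bx cx.
have : Num.max (b x) (c x) < y by rewrite gt_max bx cx.
move: xa xe => /=; lra.
Qed.


Lemma log_step (Nh Nu Nv C L : R) : 1 <= Nu -> 1 <= Nv -> 0 < Nh -> 1 <= C -> 0 < L ->
  Nh <= C * Num.max Nu Nv ->
  ln Nh / L <= Num.max (ln Nu / L) (ln Nv / L) + ln C / L.
Proof.
move=> u1 v1 h0 C1 L0 hN.
have [M [M1 hM hMl]] : exists M, [/\ 1 <= M, Num.max Nu Nv = M &
    ln M / L <= Num.max (ln Nu / L) (ln Nv / L)].
  case: (leP Nu Nv) => H.
    exists Nv; split; [done | done | by rewrite le_max lexx orbT].
  exists Nu; split; [done | done | by rewrite le_max lexx].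
rewrite hM in hN.
have : ln Nh <= ln C + ln M.
  by rewrite -lnM ?posrE ?(lt_le_trans ltr01) // ler_ln ?posrE // ?mulr_gt0 ?(lt_le_trans ltr01).
move=> hl.
have : ln Nh / L <= (ln C + ln M) / L by rewrite ler_pM2r ?invr_gt0.
rewrite mulrDl; lra.
Qed.

Lemma dim_dom (h u v : R -> R) (A B : R) :
  {within `[0, 1], continuous h} -> {within `[0, 1], continuous u} ->
  {within `[0, 1], continuous v} ->
  (forall x y, x \in `[0, 1] -> y \in `[0, 1] ->
     `|h x - h y| <= A * `|u x - u y| + B * `|v x - v y|) -> 0 <= A -> 0 <= B ->
  (upper_box_dim (graph01 h) <=
   Order.max (upper_box_dim (graph01 u)) (upper_box_dim (graph01 v)))%E.
Proof.
move=> hh hu hv H A0 B0.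
have C1 : 1 <= 42 * (A + B + 1) by nra.
apply: (@limsup_le _ _ _ (ln (42 * (A + B + 1)))); first exact: ln_ge0.
near=> d.
have d0 : 0 < d by near: d; exact: nbhs_right_gt.
have d1 : d < 1 by near: d; exact: nbhs_right_lt.
have [h1 h2 h3] := N_bounds d0 hh.
have [u1 u2 u3] := N_bounds d0 hu.
have [v1 v2 v3] := N_bounds d0 hv.
have hq := Q_dom d0 hh hu hv H A0 B0.
have L0 : 0 < - ln d by rewrite oppr_gt0 ln_lt0 // d0 d1.
apply: (log_step u1 v1 (lt_le_trans ltr01 h1) C1 L0).
have mu : Nf u d <= Num.max (Nf u d) (Nf v d) by rewrite le_max lexx.
have mv : Nf v d <= Num.max (Nf u d) (Nf v d) by rewrite le_max lexx orbT.
move: (Num.max _ _) mu mv => M mu mv.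
set K := A + B + 1 in hq C1 *.
have K1 : 1 <= K by rewrite /K; lra.
have : Qsum u d + Qsum v d <= 42 * M by lra.
move=> hs; apply: (le_trans h2); apply: (le_trans hq).
have : K * (Qsum u d + Qsum v d) <= K * (42 * M) by rewrite ler_pM2l //; lra.
lra.
Unshelve. all: end_near.
Qed.


Lemma quot_dom (f g : R -> R) (Mf Mp m : R) x y : 0 < m ->
  m <= `|f x| -> m <= `|f y| -> `|f y| <= Mf -> `|f y * g y| <= Mp ->
  `|g x - g y| <= Mf / (m * m) * `|f x * g x - f y * g y| +
                  Mp / (m * m) * `|f x - f y|.
Proof.
move=> m0 mx my fM pM.
have mm : 0 < m * m by rewrite mulr_gt0.
have e2 : Mf / (m * m) * `|f x * g x - f y * g y| + Mp / (m * m) * `|f x - f y| =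
  (Mf * `|f x * g x - f y * g y| + Mp * `|f x - f y|) / (m * m).
  by field; rewrite gt_eqF.
rewrite e2 ler_pdivlMr //.
have e : (g x - g y) * (f x * f y) =
    f y * (f x * g x - f y * g y) - f y * g y * (f x - f y) by ring.
have h1 : `|g x - g y| * (m * m) <= `|g x - g y| * (`|f x| * `|f y|).
  by apply: ler_wpM2l => //; apply: ler_pM => //; apply: ltW.
apply: (le_trans h1); rewrite -normrM -normrM e.
apply: le_trans (ler_normB _ _) _.
rewrite !normrM mulrC [X in _ + X <= _]mulrC -normrM.
by apply: lerD; rewrite mulrC; apply: ler_wpM2r.
Qed.

Lemma final_logic (a b c : \bar R) : b != c -> (a <= Order.max b c)%E ->
  (c <= Order.max a b)%E -> (b <= Order.max a c)%E -> a = Order.max b c.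
Proof.
rewrite /Order.max => neq H1 H2 H3.
case: (ltgtP b c) neq H1 H2 H3 => // hbc _ H1 H2 H3; apply: le_anti; rewrite H1 /=.
  move: H2; case: (ltgtP a b) => hab H2 //; first by move: (lt_le_trans hbc H2); rewrite ltxx.
move: H3; case: (ltgtP a c) => hac H3 //; first by move: (lt_le_trans hbc H3); rewrite ltxx.
Qed.

End Geo.

Unset Implicit Arguments.

Theorem proposition3p5 (R : realType) (f g : R -> R) :
  {within `[0%R, 1%R], continuous f} ->
  {within `[0%R, 1%R], continuous g} ->
  (forall x, x \in `[0, 1] -> f x != 0) ->
  (forall x, x \in `[0, 1] -> g x != 0) ->
  upper_box_dim (graph01 f) != upper_box_dim (graph01 g) ->
  upper_box_dim (graph01 (f \* g)) =
    Order.max (upper_box_dim (graph01 f)) (upper_box_dim (graph01 g)).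
Proof.
move=> hf hg fnz gnz neq.
have hp : {within `[0%R, 1%R], continuous (f \* g)}.
  by move=> x; apply: cvgM; [exact: hf | exact: hg].
have [Mf [Mf0 bf]] := bnd hf.
have [Mg [Mg0 bg]] := bnd hg.
have [Mp [Mp0 bp]] := bnd hp.
have [mf [mf0 lf]] := lbnd hf fnz.
have [mg [mg0 lg]] := lbnd hg gnz.
have H1 := @dim_dom _ (f \* g) f g Mg Mf hp hf hg.
have H1' : (upper_box_dim (graph01 (f \* g)%R) <=
   Order.max (upper_box_dim (graph01 f)) (upper_box_dim (graph01 g)))%E.
  apply: H1 => // x y xi yi /=.
  have -> : f x * g x - f y * g y = g x * (f x - f y) + f y * (g x - g y) by ring.
  apply: le_trans (ler_normD _ _) _; rewrite !normrM.
  apply: lerD; apply: ler_wpM2r => //; [exact: bg | exact: bf].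
have H2 : (upper_box_dim (graph01 g) <=
   Order.max (upper_box_dim (graph01 (f \* g)%R)) (upper_box_dim (graph01 f)))%E.
  apply: (@dim_dom _ g (f \* g) f (Mf / (mf * mf)) (Mp / (mf * mf))) => //.
  - move=> x y xi yi /=; apply: quot_dom => //; [exact: lf | exact: lf | exact: bf |].
    exact: (bp y yi).
  - by apply: divr_ge0 => //; apply: mulr_ge0; apply: ltW.
  - by apply: divr_ge0 => //; apply: mulr_ge0; apply: ltW.
have H3 : (upper_box_dim (graph01 f) <=
   Order.max (upper_box_dim (graph01 (f \* g)%R)) (upper_box_dim (graph01 g)))%E.
  apply: (@dim_dom _ f (f \* g) g (Mg / (mg * mg)) (Mp / (mg * mg))) => //.
  - move=> x y xi yi /=.
    have bp' : `|g y * f y| <= Mp by rewrite mulrC; exact: (bp y yi).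
    have := @quot_dom _ g f Mg Mp mg x y mg0 (lg x xi) (lg y yi) (bg y yi) bp'.
    by rewrite [g x * f x]mulrC [g y * f y]mulrC.
  - by apply: divr_ge0 => //; apply: mulr_ge0; apply: ltW.
  - by apply: divr_ge0 => //; apply: mulr_ge0; apply: ltW.
exact: final_logic neq H1' H2 H3.
Qed.
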